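(* In the discrete torus model with frame group $\mathbb{Z}_4$ and its universal calculus (context), the torsion-free and cotorsion-free spin connections are exactly \[A_{\bar1}=\alpha e_1+\beta e_2,\quad A_{\bar2}=\tfrac12(-\alpha+\beta-\gamma-\delta-s_1)e_1+\tfrac12(-\alpha-\beta+\gamma-\delta-s_2)e_2,\quad A_{\bar3}=\gamma e_1+\delta e_2,\] for functions $\alpha,\beta,\gamma,\delta$ such that $a=\gamma-\alpha$ and $b=\beta-\delta$ satisfy $(R_1+R_2)a=0$ and $(R_1+R_2)b=0$, where $s_1=\bar\partial^2\Theta_1$, $s_2=\bar\partial^1\Theta_2$. The covariant derivative is \[\nabla e_1=(b-s_1)e_1\otimes e_1+a\,e_1\otimes e_2+(a-s_2)e_2\otimes e_1-b\,e_2\otimes e_2,\] \[\nabla e_2=-a\,e_1\otimes e_1+(b-s_1)e_1\otimes e_2+b\,e_2\otimes e_1+(a-s_2)e_2\otimes e_2.\]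
   Context: Discrete torus model: $\Sigma=\mathbb{Z}_2\times\mathbb{Z}_2$, $x\to y$ iff $y-x\in\{(1,0),(0,1)\}$; diagonal zweibein $e_{1,x,x+(1,0)}=\Theta_1(x)^{-1}$, $e_{2,x,x+(0,1)}=\Theta_2(x)^{-1}$, $\Theta_a$ nowhere-vanishing with $\Theta_1R_1\Theta_2=\Theta_2R_2\Theta_1$; $R_1f(x)=f(x+(1,0))$, $R_2f(x)=f(x+(0,1))$, $\bar\partial^a=R_a-\mathrm{id}$; $e_af=R_a(f)e_a$, $\mathrm{d}f=\sum_a(\bar\partial^af)\Theta_ae_a$. Two-forms: $e_1\wedge e_2=-e_2\wedge e_1$, $e_a\wedge e_a=0$; $\mathrm{d}e_1=(\bar\partial^1\Theta_2)e_1\wedge e_2$, $\mathrm{d}e_2=-(\bar\partial^2\Theta_1)e_1\wedge e_2$. Frame group $\mathbb{Z}_4=\{\bar0,\bar1,\bar2,\bar3\}$ acting on $V=\mathrm{span}\{e_1,e_2\}$ by quarter rotations ($\bar1$: $e_1\mapsto e_2$, $e_2\mapsto-e_1$), with universal calculus $\mathcal C=\{\bar1,\bar2,\bar3\}$; $f^i=i-\bar0$, so $f^{\bar1}\triangleright e_1=e_2-e_1$, $f^{\bar1}\triangleright e_2=-e_1-e_2$, $f^{\bar2}\triangleright e_a=-2e_a$, $f^{\bar3}\triangleright e_1=-e_1-e_2$, $f^{\bar3}\triangleright e_2=e_1-e_2$. A spin connection is a triple of 1-forms $A_{\bar1},A_{\bar2},A_{\bar3}$. Torsion-free: $\mathrm{d}e_a+\sum_iA_i\wedge(f^i\triangleright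 e_a)=0$; cotorsion-free: $\mathrm{d}e_a+\sum_i(f^{-i}\triangleright e_a)\wedge A_i=0$ (inverse $-i$ in $\mathbb{Z}_4$). Covariant derivative $\nabla(\sum\alpha^ae_a)=\sum\mathrm{d}\alpha^a\otimes e_a-\sum_{i,a}\alpha^aA_i\otimes f^i\triangleright e_a$. *)

(* Defs.v *)
From HB Require Import structures.
From mathcomp Require Import all_boot all_order all_algebra.
Set Implicit Arguments. Unset Strict Implicit. Unset Printing Implicit Defensive.
Import Order.TTheory GRing.Theory Num.Theory.
Local Open Scope ring_scope.

Definition Sigma : Type := ('Z_2 * 'Z_2)%type.

Definition Fun (R : Type) := Sigma -> R.

(* Index of the frame: o1 <-> e_1, o2 <-> e_2 *)
Definition o1 : 'I_2 := ord0.
Definition o2 : 'I_2 := ord_max.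

(* A one-form sum_a f_a e_a, stored by its left coefficient functions. *)
Definition Form1 (R : Type) := 'I_2 -> Fun R.
(* An element sum_{a,b} t_{ab} e_a (x) e_b of Omega^1 (x) Omega^1. *)
Definition Form11 (R : Type) := 'I_2 -> 'I_2 -> Fun R.
(* A two-form is f e_1 /\ e_2, stored by f : Fun R. *)

Definition mkF1 (R : Type) (f g : Fun R) : Form1 R :=
  fun a => if a == o1 then f else g.
Definition mkF11 (R : Type) (t11 t12 t21 t22 : Fun R) : Form11 R :=
  fun a b => if a == o1 then (if b == o1 then t11 else t12)
             else (if b == o1 then t21 else t22).

Section Model.
Variable R : numFieldType.

Definition shift (a : 'I_2) (f : Fun R) : Fun R :=
  fun x => f (x.1 + (a == o1)%:R, x.2 + (a == o2)%:R)%R.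

Definition dbar (a : 'I_2) (f : Fun R) : Fun R := fun x => shift a f x - f x.

Definition dfun (Th : Form1 R) (f : Fun R) : Form1 R :=
  fun a x => dbar a f x * Th a x.

(* Wedge product of one-forms, using e_a f = R_a(f) e_a,
   e_a /\ e_a = 0, e_2 /\ e_1 = - e_1 /\ e_2; result is the coefficient
   of e_1 /\ e_2. *)
Definition wedge (u v : Form1 R) : Fun R :=
  fun x => u o1 x * shift o1 (v o2) x - u o2 x * shift o2 (v o1) x.

Definition de (Th : Form1 R) (a : 'I_2) : Fun R :=
  if a == o1 then dbar o1 (Th o2) else fun x => - dbar o2 (Th o1) x.

(* Vectors of V = span{e_1, e_2} (constant coefficients) *)
Definition Vec := 'I_2 -> R.
Definition ebasis (c : 'I_2) : Vec := fun b => (c == b)%:R.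
Definition cform (v : Vec) : Form1 R := fun b _ => v b.

Definition rot1 (v : Vec) : Vec := fun b => if b == o1 then - v o2 else v o1.
Definition frame_act (g : 'Z_4) (v : Vec) : Vec := iter (nat_of_ord g) rot1 v.
Definition fact (g : 'Z_4) (v : Vec) : Vec := fun b => frame_act g v b - v b.

(* A spin connection: one-forms A_i, i in C = {1bar,2bar,3bar}
   (the value at 0bar is irrelevant and never used). *)
Definition torsion_free (Th : Form1 R) (A : 'Z_4 -> Form1 R) : Prop :=
  forall (a : 'I_2) (x : Sigma),
    de Th a x + \sum_(i : 'Z_4 | i != 0) wedge (A i) (cform (fact i (ebasis a))) x = 0.

Definition cotorsion_free (Th : Form1 R) (A : 'Z_4 -> Form1 R) : Prop :=
  forall (a : 'I_2) (x : Sigma),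
    de Th a x + \sum_(i : 'Z_4 | i != 0) wedge (cform (fact (- i) (ebasis a))) (A i) x = 0.

Definition nabla (Th : Form1 R) (A : 'Z_4 -> Form1 R) (al : Form1 R) : Form11 R :=
  fun a b x => dfun Th (al b) a x
    - \sum_(c < 2) \sum_(i : 'Z_4 | i != 0) al c x * A i a x * fact i (ebasis c) b.

Definition eform (c : 'I_2) : Form1 R := fun a _ => (c == a)%:R.

End Model.

(* Main.v *)
Require Import Defs.
From HB Require Import structures.
From mathcomp Require Import all_boot all_order all_algebra.
From mathcomp Require Import ring.
From Stdlib Require Import FunctionalExtensionality.
Import Order.TTheory GRing.Theory Num.Theory.
Local Open Scope ring_scope.
Set Implicit Arguments. Unset Strict Implicit.

Lemma sumZ4 (R : zmodType) (F : 'Z_4 -> R) :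
  \sum_(i : 'Z_4 | i != 0) F i = F 1 + F 2%:R + F 3%:R.
Proof.
rewrite big_mkcond /= !big_ord_recl big_ord0 /=.
rewrite add0r addr0 !addrA.
congr (_ + _ + _); congr F; apply: val_inj => //.
Qed.

Lemma addZ2_11 (z : 'Z_2) : z + 1 + 1 = z.
Proof. by case: z => [[|[|?]] ?]; apply: val_inj. Qed.

Section S.
Variable R : numFieldType.
Variable Th : Form1 R.
Variable A : 'Z_4 -> Form1 R.

Lemma tf1 x : de Th o1 x + \sum_(i : 'Z_4 | i != 0) wedge (A i) (cform (fact i (ebasis R o1))) x
  = de Th o1 x + A 1 o1 x + A 1 o2 x + 2 * A 2%:R o2 x - A 3%:R o1 x + A 3%:R o2 x.
Proof.
rewrite sumZ4 /wedge /cform /shift /fact /frame_act /= /rot1 /ebasis /=. ring.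
Qed.
Lemma tf2 x : de Th o2 x + \sum_(i : 'Z_4 | i != 0) wedge (A i) (cform (fact i (ebasis R o2))) x
  = de Th o2 x - A 1 o1 x + A 1 o2 x - 2 * A 2%:R o1 x - A 3%:R o1 x - A 3%:R o2 x.
Proof.
rewrite sumZ4 /wedge /cform /shift /fact /frame_act /= /rot1 /ebasis /=. ring.
Qed.
Lemma cf1 x : de Th o1 x + \sum_(i : 'Z_4 | i != 0) wedge (cform (fact (-i) (ebasis R o1))) (A i) x
  = de Th o1 x - shift o1 (A 1 o2) x + shift o2 (A 1 o1) x - 2 * shift o1 (A 2%:R o2) x
    - shift o1 (A 3%:R o2) x - shift o2 (A 3%:R o1) x.
Proof.
rewrite sumZ4 /wedge /cform /fact /frame_act /= /rot1 /ebasis /=. ring.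
Qed.
Lemma cf2 x : de Th o2 x + \sum_(i : 'Z_4 | i != 0) wedge (cform (fact (-i) (ebasis R o2))) (A i) x
  = de Th o2 x + shift o1 (A 1 o2) x + shift o2 (A 1 o1) x + 2 * shift o2 (A 2%:R o1) x
    - shift o1 (A 3%:R o2) x + shift o2 (A 3%:R o1) x.
Proof.
rewrite sumZ4 /wedge /cform /fact /frame_act /= /rot1 /ebasis /=. ring.
Qed.
End S.

Lemma I2 (b : 'I_2) : b = o1 \/ b = o2.
Proof. case: b => [[|[|m]] Hm]; [left; exact: val_inj|right; exact: val_inj|done]. Qed.

Lemma lin0 {R : numFieldType} (x y z : R) : x = 0 -> y = 0 -> z = - (x + y) -> z = 0.
Proof. by move=> -> -> ->; rewrite addr0 oppr0. Qed.
Lemma lin0' {R : numFieldType} (x y z : R) : x = 0 -> y = 0 -> z = x + y -> z = 0.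
Proof. by move=> -> -> ->; rewrite addr0. Qed.
Lemma lin1 {R : numFieldType} (c y z : R) : y = 0 -> z = c * y -> z = 0.
Proof. by move=> -> ->; rewrite mulr0. Qed.
Lemma half {R : numFieldType} (c y z w : R) : y = 0 -> z * 2 - w = c * y -> z = w / 2.
Proof.
move=> ->; rewrite mulr0 => /eqP; rewrite subr_eq0 => /eqP <-.
by rewrite mulfK // pnatr_eq0.
Qed.

Theorem proposition4p2 (R : numFieldType) (Theta1 Theta2 : Fun R)
  (hT1 : forall x, Theta1 x != 0) (hT2 : forall x, Theta2 x != 0)
  (hcomp : forall x, Theta1 x * shift o1 Theta2 x = Theta2 x * shift o2 Theta1 x) :
  let Th := mkF1 Theta1 Theta2 in
  let s1 := dbar o2 Theta1 in
  let s2 := dbar o1 Theta2 in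
  (forall A : 'Z_4 -> Form1 R,
     (torsion_free Th A /\ cotorsion_free Th A) <->
     exists al be ga dl : Fun R,
       (forall x, shift o1 (fun y => ga y - al y) x + shift o2 (fun y => ga y - al y) x = 0) /\
       (forall x, shift o1 (fun y => be y - dl y) x + shift o2 (fun y => be y - dl y) x = 0) /\
       A 1 = mkF1 al be /\
       A 2%:R = mkF1 (fun x => (- al x + be x - ga x - dl x - s1 x) / 2)
                     (fun x => (- al x - be x + ga x - dl x - s2 x) / 2) /\
       A 3%:R = mkF1 ga dl)
  /\
  (forall (A : 'Z_4 -> Form1 R) (al be ga dl : Fun R),
     let a := fun y => ga y - al y in
     let b := fun y => be y - dl y in
     (forall x, shift o1 a x + shift o2 a x = 0) ->
     (forall x, shift o1 b x + shift o2 b x = 0) ->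
     A 1 = mkF1 al be ->
     A 2%:R = mkF1 (fun x => (- al x + be x - ga x - dl x - s1 x) / 2)
                   (fun x => (- al x - be x + ga x - dl x - s2 x) / 2) ->
     A 3%:R = mkF1 ga dl ->
     nabla Th A (eform R o1) =
       mkF11 (fun x => b x - s1 x) a (fun x => a x - s2 x) (fun x => - b x) /\
     nabla Th A (eform R o2) =
       mkF11 (fun x => - a x) (fun x => b x - s1 x) b (fun x => a x - s2 x)).
Proof.
move=> Th s1 s2; rewrite /Th /s1 /s2 {Th s1 s2}.
split.
- move=> A; split.
  + case=> tf cf.
    exists (A 1 o1), (A 1 o2), (A 3%:R o1), (A 3%:R o2).
    split; [|split; [|split; [|split]]].
    * move=> [x1 x2].
      have e := cf o1 (x1, x2); rewrite cf1 in e.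
      have t := tf o1 (x1 + 1, x2 + 0); rewrite tf1 in t.
      rewrite /de /dbar /shift /mkF1 /= ?addr0 ?addZ2_11 in e t *.
      apply: (lin0 e t); ring.
    * move=> [x1 x2].
      have e := cf o2 (x1, x2); rewrite cf2 in e.
      have t := tf o2 (x1 + 0, x2 + 1); rewrite tf2 in t.
      rewrite /de /dbar /shift /mkF1 /= ?addr0 ?addZ2_11 in e t *.
      apply: (lin0' e t); ring.
    * apply: functional_extensionality => a; apply: functional_extensionality => x.
      by have [->|->] := I2 a.
    * apply: functional_extensionality => a; apply: functional_extensionality => x.
      have [->|->] := I2 a.
      -- have t := tf o2 x; rewrite tf2 in t.
         rewrite /de /dbar /shift /mkF1 /= in t *.
         apply: (half (c := -1) t); ring.
      -- have t := tf o1 x; rewrite tf1 in t.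
         rewrite /de /dbar /shift /mkF1 /= in t *.
         apply: (half (c := 1) t); ring.
    * apply: functional_extensionality => a; apply: functional_extensionality => x.
      by have [->|->] := I2 a.
  + case=> al [be [ga [dl [ha [hb [h1 [h2 h3]]]]]]].
    split => a [x1 x2]; have [->|->] := I2 a.
    * rewrite tf1 h1 h2 h3 /de /dbar /shift /mkF1 /=; field; rewrite ?pnatr_eq0 //.
    * rewrite tf2 h1 h2 h3 /de /dbar /shift /mkF1 /=; field; rewrite ?pnatr_eq0 //.
    * rewrite cf1 h1 h2 h3.
      have e := ha (x1, x2).
      rewrite /de /dbar /shift /mkF1 /= ?addr0 ?addZ2_11 in e *.
      apply: (lin1 (c := -1) e) => //; field; rewrite ?pnatr_eq0 //.
    * rewrite cf2 h1 h2 h3.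
      have e := hb (x1, x2).
      rewrite /de /dbar /shift /mkF1 /= ?addr0 ?addZ2_11 in e *.
      apply: (lin1 (c := 1) e) => //; field; rewrite ?pnatr_eq0 //.
- move=> A al be ga dl ha hb h1 h2 h3.
  split; apply: functional_extensionality => a; apply: functional_extensionality => b;
    apply: functional_extensionality => x;
    have [->|->] := I2 a; have [->|->] := I2 b;
    rewrite /nabla (big_ord_recl 1) (big_ord_recl 0) big_ord0 !sumZ4 h1 h2 h3
      /dfun /dbar /shift /eform /mkF1 /mkF11 /fact /frame_act /= /rot1 /ebasis /=; field; rewrite ?pnatr_eq0 //.
Qed.
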